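(* Let $(\mathcal{M},\delta)$ be a finite metric space and $k$ an integer with $2\le k<|\mathcal{M}|$. Let $\alpha=\min\{GR_P : P\subset\mathcal{M},\ |P|=k\}$ be the optimal gap ratio, and let $S_k$ be the output of the farthest-point-insertion procedure: choose $q_1,q_2\in\mathcal{M}$ with $\delta(q_1,q_2)=\operatorname{diam}(\mathcal{M})$, set $S_2=\{q_1,q_2\}$, and for $i=2,\dots,k-1$ let $q_{i+1}$ be any point of $\mathcal{M}$ maximizing $\delta(\cdot,S_i)$ and set $S_{i+1}=S_i\cup\{q_{i+1}\}$. Then $GR_{S_k}\le\rho\,\alpha$, where: (i) if $\alpha\ge1$, $\rho=\frac{2}{\alpha}\le 2$; (ii) if $\frac23\le\alpha<1$, $\rho=\frac{2}{\alpha}\le3$; (iii) if $\alpha<\frac23$, $\rho=\frac{4}{2-\alpha}<3$.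
   Context: For a metric space $(\mathcal{M},\delta)$ and a finite nonempty set $S\subset\mathcal{M}$, $\delta(x,S)=\min_{s\in S}\delta(x,s)$ and $R_S=\sup_{x\in\mathcal{M}}\delta(x,S)$; if $|S|\ge2$, $r_S=\min_{p,q\in S,\,p\ne q}\delta(p,q)/2$ and the gap ratio is $GR_S=R_S/r_S$. *)

(* Defs.v *)
From mathcomp Require Import all_boot all_order all_algebra.
Set Implicit Arguments. Unset Strict Implicit. Unset Printing Implicit Defensive.
Import Order.TTheory GRing.Theory Num.Theory.
Local Open Scope ring_scope.

Section Defs.
Variables (R : realFieldType) (T : finType).

Definition is_metric (d : T -> T -> R) : Prop :=
  [/\ forall x y, 0 <= d x y,
      forall x y, d x y = 0 <-> x = y,
      forall x y, d x y = d y x &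
      forall x y z, d x z <= d x y + d y z].

Definition diam (d : T -> T -> R) : R :=
  \big[Num.max/0]_(x : T) \big[Num.max/0]_(y : T) d x y.

(* delta(x,S) = min_{s in S} d x s.  The neutral element diam d is an upper
   bound of all distances, so for nonempty S this is exactly the minimum. *)
Definition distS (d : T -> T -> R) (x : T) (S : {set T}) : R :=
  \big[Num.min/diam d]_(s in S) d x s.

Definition covR (d : T -> T -> R) (S : {set T}) : R :=
  \big[Num.max/0]_(x : T) distS d x S.

(* r_S = min_{p != q in S} d p q / 2   (meaningful for #|S| >= 2) *)
Definition packr (d : T -> T -> R) (S : {set T}) : R :=
  (\big[Num.min/diam d]_(p in S) \big[Num.min/diam d]_(q in S | q != p) d p q) / 2.

Definition GR (d : T -> T -> R) (S : {set T}) : R := covR d S / packr d S.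

(* S_i = {q_0, ..., q_{i-1}} (0-indexed version of the paper's S_i) *)
Definition prefix_set (q : nat -> T) (i : nat) : {set T} :=
  [set q (nat_of_ord j) | j : 'I_i].

Definition fpi_run (d : T -> T -> R) (k : nat) (q : nat -> T) : Prop :=
  (forall x y, d x y <= d (q 0%N) (q 1%N)) /\
  (forall i, (2 <= i < k)%N -> forall x,
      distS d x (prefix_set q i) <= distS d (q i) (prefix_set q i)).

End Defs.

(* Main.v *)
Require Import Defs.
From mathcomp Require Import all_boot all_order all_algebra.
From mathcomp Require Import ring lra.
Import Order.TTheory GRing.Theory Num.Theory.
Local Open Scope ring_scope.

Lemma le_diam (R : realFieldType) (T : finType) (d : T -> T -> R) x y :
  d x y <= diam d.
Proof.
rewrite /diam; apply: (bigmax_sup x) => //.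
exact: (bigmax_sup y).
Qed.

Lemma distS_le (R : realFieldType) (T : finType) (d : T -> T -> R) x s (S : {set T}) :
  s \in S -> distS d x S <= d x s.
Proof. by move=> sS; rewrite /distS; apply: (bigmin_le_cond _ (fun s => d x s)). Qed.

Lemma distS_le_diam (R : realFieldType) (T : finType) (d : T -> T -> R) x (S : {set T}) :
  distS d x S <= diam d.
Proof. exact: bigmin_le_id. Qed.

Lemma distS_ge (R : realFieldType) (T : finType) (d : T -> T -> R) x (S : {set T}) c :
  c <= diam d -> (forall s, s \in S -> c <= d x s) -> c <= distS d x S.
Proof. by move=> h1 h2; apply: le_bigmin. Qed.

Lemma distS_sub (R : realFieldType) (T : finType) (d : T -> T -> R) x (A B : {set T}) :
  A \subset B -> distS d x B <= distS d x A.
Proof.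
move=> /subsetP AB; apply: distS_ge; first exact: distS_le_diam.
by move=> s /AB; apply: distS_le.
Qed.

Lemma distS_attained (R : realFieldType) (T : finType) (d : T -> T -> R) x (S : {set T}) s0 :
  s0 \in S -> exists2 s, s \in S & d x s <= distS d x S.
Proof.
move=> s0S.
case: (@arg_minP _ _ _ s0 (mem S) (fun s => d x s) s0S) => s sS smin.
exists s => //; apply: distS_ge; first exact: le_diam.
exact: smin.
Qed.

Lemma covR_ge (R : realFieldType) (T : finType) (d : T -> T -> R) x (S : {set T}) :
  distS d x S <= covR d S.
Proof. by rewrite /covR; apply: (bigmax_sup x). Qed.

Lemma covR_ge0 (R : realFieldType) (T : finType) (d : T -> T -> R) (S : {set T}) :
  0 <= covR d S.
Proof. exact: bigmax_ge_id. Qed.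

Lemma covR_le (R : realFieldType) (T : finType) (d : T -> T -> R) (S : {set T}) c :
  0 <= c -> (forall x, distS d x S <= c) -> covR d S <= c.
Proof. by move=> h1 h2; apply: bigmax_le. Qed.

Lemma packr_le (R : realFieldType) (T : finType) (d : T -> T -> R) (S : {set T}) p q :
  p \in S -> q \in S -> q != p -> 2 * packr d S <= d p q.
Proof.
move=> pS qS qp; rewrite /packr mulrC divfK ?pnatr_eq0 //.
apply: (bigmin_inf p) => //.
by apply: (bigmin_inf q) => //; rewrite qS.
Qed.

Lemma packr_ge (R : realFieldType) (T : finType) (d : T -> T -> R) (S : {set T}) c :
  c <= diam d -> (forall p q, p \in S -> q \in S -> q != p -> c <= d p q) ->
  c <= 2 * packr d S.
Proof.
move=> h1 h2; rewrite /packr mulrC divfK ?pnatr_eq0 //.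
apply: le_bigmin => // p pS; apply: le_bigmin => // q /andP[qS qp].
exact: h2.
Qed.

Lemma mem_prefix (T : finType) (q : nat -> T) i j :
  (i < j)%N -> q i \in prefix_set q j.
Proof. by move=> h; apply/imsetP; exists (Ordinal h). Qed.

Lemma prefix_sub (T : finType) (q : nat -> T) j m :
  (j <= m)%N -> prefix_set q j \subset prefix_set q m.
Proof.
move=> jm; apply/subsetP => x /imsetP[o _ ->].
by apply: mem_prefix; exact: leq_trans (ltn_ord o) jm.
Qed.

Lemma prefixP (T : finType) (q : nat -> T) j x :
  x \in prefix_set q j -> exists2 i, (i < j)%N & x = q i.
Proof. by move=> /imsetP[o _ ->]; exists (nat_of_ord o). Qed.

Lemma key (R : realFieldType) (T : finType) (d : T -> T -> R) k q i j y :
  is_metric d -> fpi_run d k q -> (i < j)%N -> (j < k)%N ->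
  distS d y (prefix_set q j) <= d (q i) (q j).
Proof.
move=> [_ _ dsym _] [h01 hi] ij jk.
case: (ltnP j 2) => j2.
  have j1 : j = 1%N by case: j ij j2 {jk} => [|[|]].
  have i0 : i = 0%N by move: ij; rewrite j1; case: i.
  subst; apply: le_trans (h01 y (q 0%N)).
  by apply: distS_le; apply: mem_prefix.
apply: le_trans (hi j _ y) _; first by rewrite j2.
by rewrite dsym; apply: distS_le; apply: mem_prefix.
Qed.

Lemma covR_le_pair (R : realFieldType) (T : finType) (d : T -> T -> R) k q i j :
  is_metric d -> fpi_run d k q -> (i < k)%N -> (j < k)%N -> i != j ->
  covR d (prefix_set q k) <= d (q i) (q j).
Proof.
move=> hm hf ik jk ij.
have [d0 _ dsym _] := hm.
wlog lij : i j ik jk ij / (i < j)%N.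
  move=> W; case: (ltngtP i j) => h; first exact: W.
  - by rewrite dsym; apply: W => //; rewrite eq_sym.
  - by move: ij; rewrite h eqxx.
apply: covR_le => // x.
have hs := @distS_sub _ _ d x _ _ (@prefix_sub _ q _ _ (ltnW jk)).
apply: le_trans hs _.
exact: key hm hf lij jk.
Qed.

Lemma GR_le2 (R : realFieldType) (T : finType) (d : T -> T -> R) k q :
  is_metric d -> fpi_run d k q -> GR d (prefix_set q k) <= 2.
Proof.
move=> hm hf; have [d0 _ dsym _] := hm.
have h : covR d (prefix_set q k) <= 2 * packr d (prefix_set q k).
  apply: packr_ge.
    apply: covR_le => [|x]; last exact: distS_le_diam.
    exact: le_trans (d0 (q 0%N) (q 0%N)) (@le_diam _ _ d _ _).
  move=> p p' /prefixP[i ik ->] /prefixP[j jk ->] hne.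
  apply: covR_le_pair => //; apply: contraNneq hne => ->; done.
rewrite /GR; have c0 := @covR_ge0 _ _ d (prefix_set q k).
have [p0|p0] := eqVneq (packr d (prefix_set q k)) 0.
  by rewrite p0 invr0 mulr0.
have pp : 0 < packr d (prefix_set q k).
  rewrite lt_neqAle eq_sym p0 /=.
  by rewrite -(@pmulr_rge0 _ 2) //; exact: le_trans c0 h.
by rewrite ler_pdivrMr // mulrC.
Qed.

Arguments le_diam {R T}. Arguments distS_le {R T}. Arguments covR_ge {R T}.
Arguments packr_le {R T} d {S p q}. Arguments key {R T d k q i j} y.
Arguments covR_ge0 {R T}. Arguments mem_prefix {T}. Arguments prefix_sub {T}.

Lemma case3 (R : realFieldType) (T : finType) (d : T -> T -> R) k q (P : {set T}) :
  is_metric d -> (2 <= k)%N -> #|P| = k -> fpi_run d k q ->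
  3 * covR d P < 2 * packr d P ->
  covR d (prefix_set q k) <= 2 * covR d P /\
  2 * packr d P - covR d P <= 2 * packr d (prefix_set q k).
Proof.
move=> hm k2 cP hf hab.
have [d0 d00 dsym dtri] := hm.
set a := covR d P; set b := packr d P.
have a0 : 0 <= a := covR_ge0 d P.
have k0 : (0 < k)%N by apply: leq_trans k2.
have [p0 p0P] : exists p0, p0 \in P.
  by apply/card_gt0P; rewrite cP.
have hex : forall x, exists s, (s \in P) && (d x s <= a).
  move=> x; have [s sP hs] := @distS_attained _ _ d x P p0 p0P.
  by exists s; rewrite sP /=; apply: le_trans hs (covR_ge d x P).
pose f x := xchoose (hex x).
have fP x : f x \in P by have /andP[] := xchooseP (hex x).
have fd x : d x (f x) <= a by have /andP[] := xchooseP (hex x).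
have far p s : p \in P -> f s != p -> 2 * b - a <= d p s.
  move=> pP ne; have h1 := packr_le d pP (fP s) ne.
  have h2 := dtri p s (f s); have h3 := fd s.
  rewrite lerBlDr.
  apply: le_trans h1 _; apply: le_trans h2 _; exact: lerD.
pose g (o : 'I_k) := f (q (nat_of_ord o)).
pose F := [set g o | o in [set: 'I_k]].
have FP : F \subset P by apply/subsetP => y /imsetP[o _ ->]; exact: fP.
have Fk : (#|F| <= k)%N.
  by apply: leq_trans (leq_imset_card _ _) _; rewrite cardsT card_ord.
have covpair : forall i j, (i < k)%N -> (j < k)%N -> i != j ->
    covR d (prefix_set q k) <= d (q i) (q j).
  by move=> i j ik jk ij; apply: covR_le_pair.
have PF : P \subset F.
  apply/negPn/negP => /subsetPn[p pP pF].
  have Fsmall : (#|F| < k)%N.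
    have : F \subset P :\ p.
      apply/subsetP => y yF; rewrite !inE (subsetP FP _ yF) andbT.
      by apply: contraNneq pF => <-.
    move/subset_leq_card => h; apply: leq_ltn_trans h _.
    by rewrite -cP (cardsD1 p P) pP add1n ltnS leqnn.
  have [inj|ninj] := boolP [forall o1 : 'I_k, forall o2 : 'I_k,
                                 (g o1 == g o2) ==> (o1 == o2)].
    have : #|F| == #|[set: 'I_k]|.
      apply/imset_injP => o1 o2 _ _ e.
      by move/forallP: inj => /(_ o1) /forallP /(_ o2) /implyP /(_ (introT eqP e)) /eqP.
    by rewrite cardsT card_ord => /eqP h; rewrite h ltnn in Fsmall.
  move: ninj; rewrite negb_forall => /existsP[o1]; rewrite negb_forall => /existsP[o2].
  rewrite negb_imply => /andP[/eqP e ne].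
  have up : covR d (prefix_set q k) <= a + a.
    apply: le_trans (covpair o1 o2 (ltn_ord o1) (ltn_ord o2) ne) _.
    apply: le_trans (dtri _ (g o1) _) _; apply: lerD; first exact: fd.
    by rewrite e dsym; exact: fd.
  have lo : 2 * b - a <= covR d (prefix_set q k).
    apply: le_trans (covR_ge d p _).
    apply: distS_ge.
      apply: le_trans (le_diam d p (q 0%N)).
      apply: far => //; apply: contraNneq pF => <-.
      by apply/imsetP; exists (Ordinal k0).
    move=> s /prefixP[i ik ->]; apply: far => //.
    by apply: contraNneq pF => <-; apply/imsetP; exists (Ordinal ik).
  have := le_trans lo up; move: hab; rewrite -/a -/b; lra.
have injg : {in [set: 'I_k] &, injective g}.
  apply/imset_injP; rewrite cardsT card_ord eqn_leq Fk /=.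
  by have := subset_leq_card PF; rewrite cP.
split.
  apply: covR_le; first by rewrite mulr_ge0.
  move=> x.
  have : f x \in F by apply: (subsetP PF); exact: fP.
  case/imsetP => o _ eo.
  apply: le_trans (distS_le d x _ _ (mem_prefix q _ _ (ltn_ord o))) _.
  apply: le_trans (dtri _ (f x) _) _; rewrite mulr2n mulrDl mul1r.
  apply: lerD; first exact: fd.
  by rewrite eo dsym; exact: fd.
set p' := f (q k.-1).
have km : (k.-1 < k)%N by rewrite prednK // ltnS leqnn.
have lo : 2 * b - a <= distS d p' (prefix_set q k.-1).
  have farj : forall j, (j < k.-1)%N -> 2 * b - a <= d p' (q j).
    move=> j jk; apply: far; first exact: fP.
    apply/eqP => e.
    have jk' : (j < k)%N by apply: ltn_trans jk km.
    have := injg (Ordinal jk') (Ordinal km) (in_setT _) (in_setT _) e.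
    by move/(congr1 val) => /= ej; rewrite ej ltnn in jk.
  apply: distS_ge.
    apply: le_trans (le_diam d p' (q 0%N)); apply: farj.
    by rewrite -ltnS prednK.
  by move=> s /prefixP[j jk ->]; apply: farj.
apply: packr_ge.
  apply: le_trans lo _; exact: distS_le_diam.
move=> p1 p2 /prefixP[i ik ->] /prefixP[j jk ->] hne.
have ij : i != j by apply: contraNneq hne => ->.
wlog lij : i j ik jk ij {hne} / (i < j)%N.
  move=> W; case: (ltngtP i j) => h; first exact: W.
  - by rewrite dsym; apply: W => //; rewrite eq_sym.
  - by move: ij; rewrite h eqxx.
apply: le_trans lo _.
apply: le_trans (key p' hm hf lij jk).
apply: distS_sub; apply: prefix_sub.
by rewrite -ltnS prednK.
Qed.

Lemma packr_gt0 (R : realFieldType) (T : finType) (d : T -> T -> R) (P : {set T}) :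
  is_metric d -> (2 <= #|P|)%N -> 0 < packr d P.
Proof.
move=> [d0 d00 dsym _] cP.
have [p pP] : exists p, p \in P by apply/card_gt0P; apply: leq_trans cP.
have [p' p'P] : exists p', p' \in P :\ p.
  apply/card_gt0P; move: cP; rewrite (cardsD1 p P) pP add1n ltnS //.
move: p'P; rewrite !inE => /andP[np' p'P].
have dpos : forall x y, x != y -> 0 < d x y.
  move=> x y ne; rewrite lt_neqAle d0 andbT eq_sym.
  by apply/eqP => /d00 e; rewrite e eqxx in ne.
rewrite /packr divr_gt0 //; apply: lt_bigmin.
  exact: lt_le_trans (dpos _ _ np') (le_diam d _ _).
move=> x xP; apply: lt_bigmin.
  exact: lt_le_trans (dpos _ _ np') (le_diam d _ _).
by move=> y /andP[_ yx]; apply: dpos; rewrite eq_sym.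
Qed.

Arguments GR_le2 {R T d k q}. Arguments case3 {R T d k q P}.

Theorem theorem8 (R : realFieldType) (T : finType) (d : T -> T -> R)
  (k : nat) (alpha : R) (q : nat -> T) :
  is_metric d ->
  (2 <= k < #|T|)%N ->
  (* alpha is the minimum of GR_P over all P with |P| = k *)
  (exists P : {set T}, #|P| = k /\ GR d P = alpha) ->
  (forall P : {set T}, #|P| = k -> alpha <= GR d P) ->
  fpi_run d k q ->
  [/\ 1 <= alpha -> GR d (prefix_set q k) <= (2 / alpha) * alpha /\ 2 / alpha <= 2,
      2 / 3 <= alpha < 1 ->
        GR d (prefix_set q k) <= (2 / alpha) * alpha /\ 2 / alpha <= 3 &
      alpha < 2 / 3 ->
        GR d (prefix_set q k) <= (4 / (2 - alpha)) * alpha /\ 4 / (2 - alpha) < 3].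
Proof.
move=> hm /andP[k2 kT] [P [cP gP]] _ hf.
have G2 := GR_le2 hm hf.
split.
- move=> a1; have a0 : 0 < alpha by lra.
  rewrite divfK ?gt_eqF //; split => //.
  by rewrite ler_pdivrMr //; lra.
- move=> /andP[a1 a2]; have a0 : 0 < alpha by lra.
  rewrite divfK ?gt_eqF //; split => //.
  by rewrite ler_pdivrMr //; lra.
move=> a23.
have b0 : 0 < packr d P by apply: packr_gt0; rewrite // cP.
have a0 : 0 <= covR d P := covR_ge0 d P.
have hab : 3 * covR d P < 2 * packr d P.
  by move: a23; rewrite -gP /GR ltr_pdivrMr //; lra.
have [h1 h2] := case3 hm k2 cP hf hab.
have c0 := covR_ge0 d (prefix_set q k).
set a := covR d P in a0 hab h1 h2; set b := packr d P in b0 hab h2.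
set c := covR d (prefix_set q k) in h1 c0; set r := packr d (prefix_set q k) in h2.
have r0 : 0 < r by lra.
have al : alpha = a / b by rewrite -gP.
have e : 4 / (2 - alpha) * alpha = 4 * a / (2 * b - a).
  rewrite al; field; apply/andP; split; rewrite ?gt_eqF //; lra.
split; last by rewrite ltr_pdivrMr; lra.
rewrite e /GR -/c -/r ler_pdivrMr //.
have X0 : 0 <= 4 * a / (2 * b - a) by rewrite divr_ge0 //; lra.
apply: le_trans (ler_wpM2l X0 (_ : (2 * b - a) / 2 <= r)); last by lra.
have -> : 4 * a / (2 * b - a) * ((2 * b - a) / 2) = 2 * a.
  field; rewrite gt_eqF //; lra.
done.
Qed.
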